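(* If Weighted Majority Rule 5 selects $P$ over $Q$, then $SC(P)\le SC(Q)+(1+\sqrt2)\,SC(Z)$ for every point $Z$ of the metric space.
   Context: Voters $N$ and candidates $P,Q$ are points of an arbitrary metric space $(X,d)$; $SC(Y)=\sum_{i\in N}d(i,Y)$ for $Y\in X$. $A$ is the set of voters preferring $P$ ($d(i,P)\le d(i,Q)$) with strengths $\alpha_i=d(i,Q)/d(i,P)$; $B$ the set preferring $Q$ with strengths $\beta_j=d(j,P)/d(j,Q)$. Let $w(x)=\frac{\sqrt2x-1}{x+1}$ for $x>\sqrt2$ and $w(x)=x-1$ for $1\le x\le\sqrt2$. Weighted Majority Rule 5 selects $P$ over $Q$ iff $\sum_{i\in A}w(\alpha_i)\ge\sum_{j\in B}w(\beta_j)$. *)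

(* Defs.v *)
From Stdlib Require Import Reals Lra List.
Open Scope R_scope.

Definition is_metric {X : Type} (d : X -> X -> R) : Prop :=
  (forall x y, 0 <= d x y) /\
  (forall x y, d x y = 0 <-> x = y) /\
  (forall x y, d x y = d y x) /\
  (forall x y z, d x z <= d x y + d y z).

Definition SC {X : Type} (d : X -> X -> R) (voters : list X) (Y : X) : R :=
  fold_right (fun i acc => d i Y + acc) 0 voters.

Definition w (x : R) : R :=
  if Rle_dec x (sqrt 2) then x - 1 else (sqrt 2 * x - 1) / (x + 1).

(* Degenerate cases: near = 0 < far means strength = +infinity, weight
   lim_{x->oo} w x = sqrt 2; near = far = 0 is a tie (strength 1), weight w 1 = 0. *)
Definition voter_weight (near far : R) : R :=
  if Req_EM_T near 0 then (if Req_EM_T far 0 then 0 else sqrt 2)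
  else w (far / near).

Definition weight_A {X : Type} (d : X -> X -> R) (voters : list X) (P Q : X) : R :=
  fold_right (fun i acc =>
    (if Rle_dec (d i P) (d i Q) then voter_weight (d i P) (d i Q) else 0) + acc)
    0 voters.

Definition weight_B {X : Type} (d : X -> X -> R) (voters : list X) (P Q : X) : R :=
  fold_right (fun j acc =>
    (if Rle_dec (d j P) (d j Q) then 0 else voter_weight (d j Q) (d j P)) + acc)
    0 voters.

Definition WMR5_selects_P {X : Type} (d : X -> X -> R) (voters : list X) (P Q : X) : Prop :=
  weight_B d voters P Q <= weight_A d voters P Q.

(* Main.v *)
Require Import Defs.
From Stdlib Require Import Reals List Lra Psatz.
Open Scope R_scope.

Lemma s2_facts : sqrt 2 * sqrt 2 = 2 /\ 1.4 < sqrt 2 < 1.5.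
Proof.
  assert (H : sqrt 2 * sqrt 2 = 2) by (apply sqrt_sqrt; lra).
  assert (Hp : 0 <= sqrt 2) by apply sqrt_pos.
  split; [exact H|]. split; nra.
Qed.



Lemma w_A (t : R) : 1 <= t -> 0 <= w t /\ w t <= t - 1 /\ w t <= sqrt 2.
Proof.
  intro Ht. destruct s2_facts as [Hs [Hs1 Hs2]].
  unfold w. destruct (Rle_dec t (sqrt 2)) as [HH|HH].
  - lra.
  - assert (Ht1 : 0 < t + 1) by lra.
    set (W := (sqrt 2 * t - 1) / (t + 1)).
    assert (HW : W * (t + 1) = sqrt 2 * t - 1) by (unfold W; field; lra).
    split; [|split]; nra.
Qed.

Lemma w_B (t : R) : 1 < t -> 0 <= w t /\ t - 1 <= w t * t.
Proof.
  intro Ht. destruct s2_facts as [Hs [Hs1 Hs2]].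
  unfold w. destruct (Rle_dec t (sqrt 2)) as [HH|HH].
  - nra.
  - assert (Ht1 : 0 < t + 1) by lra.
    set (W := (sqrt 2 * t - 1) / (t + 1)).
    assert (HW : W * (t + 1) = sqrt 2 * t - 1) by (unfold W; field; lra).
    split; nra.
Qed.

Lemma voterA x y z a : 0 <= x -> x <= y -> 0 <= z -> 0 <= a -> a <= x + z ->
  x - y - (1 + sqrt 2) * z <= - (a * voter_weight x y).
Proof.
  intros Hx Hxy Hz Ha Haz. destruct s2_facts as [Hs [Hs1 Hs2]].
  unfold voter_weight.
  destruct (Req_EM_T x 0) as [E|E].
  - destruct (Req_EM_T y 0); subst; nra.
  - assert (Hx' : 0 < x) by lra.
    set (t := y / x).
    assert (Hy : y = t * x) by (unfold t; field; lra).
    assert (Ht : 1 <= t).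
    { unfold t. apply (Rmult_le_reg_r x); [lra|]. unfold Rdiv.
      rewrite Rmult_assoc, Rinv_l; lra. }
    destruct (w_A t Ht) as [H1 [H2 H3]].
    assert (0 <= (x + z - a) * w t) by nra.
    assert (0 <= x * (t - 1 - w t)) by nra.
    assert (0 <= z * (1 + sqrt 2 - w t)) by nra.
    nra.
Qed.

Lemma voterB x y z a : 0 <= y -> y < x -> 0 <= z -> 0 <= a -> x <= a + z ->
  x - y - (1 + sqrt 2) * z <= a * voter_weight y x.
Proof.
  intros Hy Hxy Hz Ha Haz. destruct s2_facts as [Hs [Hs1 Hs2]].
  unfold voter_weight.
  destruct (Req_EM_T y 0) as [E|E].
  - destruct (Req_EM_T x 0); subst; nra.
  - assert (Hy' : 0 < y) by lra.
    set (t := x / y).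
    assert (Hx : x = t * y) by (unfold t; field; lra).
    assert (Ht : 1 < t).
    { unfold t. apply (Rmult_lt_reg_r y); [lra|]. unfold Rdiv.
      rewrite Rmult_assoc, Rinv_l; lra. }
    destruct (w_B t Ht) as [H1 H2].
    (* x - y = y (t-1) <= y t w = x w <= (a+z) w ; need w <= 1 + ... *)
    assert (Hw : w t <= sqrt 2) by (destruct (w_A t) as [_ [_ ?]]; lra).
    assert (0 <= y * (w t * t - (t - 1))) by nra.
    assert (0 <= (a + z - x) * w t) by nra.
    assert (0 <= z * (1 + sqrt 2 - w t)) by nra.
    nra.
Qed.

Lemma sum_bound (X : Type) (d : X -> X -> R) (hd : is_metric d)
  (voters : list X) (P Q Z : X) :
  SC d voters P - SC d voters Q - (1 + sqrt 2) * SC d voters Z <=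
  d P Z * (weight_B d voters P Q - weight_A d voters P Q).
Proof.
  destruct hd as [Hpos [Hzero [Hsym Htri]]].
  induction voters as [|i vs IH]; simpl.
  - lra.
  - assert (Ha : 0 <= d P Z) by apply Hpos.
    assert (T1 : d P Z <= d i P + d i Z).
    { pose proof (Htri P i Z) as K. rewrite (Hsym P i) in K. lra. }
    assert (T2 : d i P <= d P Z + d i Z).
    { pose proof (Htri i Z P) as K. rewrite (Hsym Z P) in K. lra. }
    pose proof (Hpos i P). pose proof (Hpos i Q). pose proof (Hpos i Z).
    destruct (Rle_dec (d i P) (d i Q)) as [HH|HH].
    + pose proof (voterA (d i P) (d i Q) (d i Z) (d P Z)) as V.
      nra.
    + pose proof (voterB (d i P) (d i Q) (d i Z) (d P Z)) as V.
      nra.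
Qed.

Theorem mainTheorem15 (X : Type) (d : X -> X -> R) (hd : is_metric d)
  (voters : list X) (P Q : X) :
  WMR5_selects_P d voters P Q ->
  forall Z : X, SC d voters P <= SC d voters Q + (1 + sqrt 2) * SC d voters Z.
Proof.
  intros Hw Z. unfold WMR5_selects_P in Hw.
  pose proof (sum_bound X d hd voters P Q Z) as S.
  assert (Ha : 0 <= d P Z) by (destruct hd; auto).
  assert (0 <= d P Z * (weight_A d voters P Q - weight_B d voters P Q)) by nra.
  nra.
Qed.
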